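(* Let $\mathfrak I$ be a derivative-dependent value function. Then: (1) $\mathfrak I$ is unbiased; (2) $\mathfrak I$ satisfies (ModEC); (3) if $\mathfrak I$ is weakly chain-rule decomposable, then it is chain-rule decomposable; (4) if $\mathfrak I$ is weakly rank preserving, then it is rank preserving; (5) if $\mathfrak I$ satisfies (Dic) and (Dum), then it satisfies (Bound).
   Context: $X$ is a fixed finite set of variables. $\mathbb B(X)$ is the set of Boolean functions $\{0,1\}^X\to\{0,1\}$, combined pointwise by $\lor,\land$ (juxtaposition), $\oplus$, negation $\overline f$; a variable $x$ also denotes $\mathbf u\mapsto\mathbf u(x)$; $f\ge g$ is pointwise. $f_{x/c}$ is $f$ with $x$ fixed to $c$. $\mathrm{dep}(f)=\{x: f_{x/1}\ne f_{x/0}\}$; $f$ is monotone in $x$ if $f_{x/1}\ge f_{x/0}$. $f[x/s]=s f_{x/1}\lor\overline s f_{x/0}$; $\mathrm D_xf=f_{x/1}\oplus f_{x/0}$. Modularity: $f$ is modular in $g$ if $g$ is not constant and there are $\ell\in\mathbb B(X)$, $z\in X$ with $\mathrm{dep}(\ell)\cap\mathrm{dep}(g)=\emptyset$ and $f=\ell[z/g]$; monotonically modular if moreover $\ell$ is monotone in $z$. Then $f_{g/1}:=\ell_{z/1}$, $f_{g/0}:=\ell_{z/0}$ (well defined), and for a variable $w$, $f[g/w]:=w f_{g/1}\lor\overline w f_{g/0}$. A value function is a map $\mathfrak I:X\times\mathbb B(X)\to\mathbb R$. Properties (quantified over all $x,y\in X$, $f,g,h\in\mathbb B(X)$): (Bound)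 $0\le\mathfrak I_x(f)\le1$; (Dum) $\mathfrak I_x(f)=0$ if $x\notin\mathrm{dep}(f)$; (Dic) $\mathfrak I_x(x)=\mathfrak I_x(\overline x)=1$; (ModEC) $\mathfrak I_x(f)\ge\mathfrak I_x(h)$ whenever $f,h$ are monotonically modular in $g$, $f_{g/1}\ge h_{g/1}$, $h_{g/0}\ge f_{g/0}$, $x\in\mathrm{dep}(g)$; unbiased: $\mathfrak I_x(g)=\mathfrak I_x(\overline g)$; derivative dependent: $\mathrm D_xf\ge\mathrm D_xg\Rightarrow\mathfrak I_x(f)\ge\mathfrak I_x(g)$; rank preserving: for $f$ modular in $g$ and $x,y\in\mathrm{dep}(g)$, $\mathfrak I_x(g)\ge\mathfrak I_y(g)\Rightarrow\mathfrak I_x(f)\ge\mathfrak I_y(f)$; chain-rule decomposable: for $f$ modular in $g$ and $x\in\mathrm{dep}(g)$, $\mathfrak I_x(f)=\mathfrak I_x(g)\,\mathfrak I_{x_g}(f[g/x_g])$ for a variable $x_g\notin\mathrm{dep}(f)$. The weak variants require these only when $f$ is monotonically modular in $g$. *)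

(* Defs.v *)
From HB Require Import structures.
From mathcomp Require Import all_boot all_order all_algebra.
From mathcomp Require Import reals.
Set Implicit Arguments. Unset Strict Implicit. Unset Printing Implicit Defensive.
Import Order.TTheory GRing.Theory Num.Theory.

Section BoolFun.
Variable X : finType.

Definition assign := {ffun X -> bool}.
Definition BF := {ffun assign -> bool}.

Definition bvar (x : X) : BF := [ffun u : assign => u x].

Definition bneg (f : BF) : BF := [ffun u => ~~ f u].
Definition ble (g f : BF) : Prop := forall u : assign, g u ==> f u.

Definition upd (u : assign) (x : X) (c : bool) : assign :=
  [ffun y => if y == x then c else u y].

Definition restr (f : BF) (x : X) (c : bool) : BF := [ffun u => f (upd u x c)].

Definition dep (f : BF) : {set X} := [set x | restr f x true != restr f x false].

Definition monotone_in (f : BF) (x : X) : Prop := ble (restr f x false) (restr f x true).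

Definition subst (f : BF) (x : X) (s : BF) : BF :=
  [ffun u => (s u && restr f x true u) || (~~ s u && restr f x false u)].

Definition deriv (x : X) (f : BF) : BF :=
  [ffun u => restr f x true u (+) restr f x false u].

Definition nonconstant (g : BF) : Prop := exists u v : assign, g u != g v.

Definition modular_wit (f g l : BF) (z : X) : Prop :=
  nonconstant g /\ [disjoint dep l & dep g] /\ f = subst l z g.

Definition mmodular_wit (f g l : BF) (z : X) : Prop :=
  modular_wit f g l z /\ monotone_in l z.

Definition modular (f g : BF) : Prop := exists l z, modular_wit f g l z.
Definition mmodular (f g : BF) : Prop := exists l z, mmodular_wit f g l z.

(* For a witness (l, z): f_{g/c} := l_{z/c}, and f[g/w] := w f_{g/1} \/ ~w f_{g/0},
   which is literally subst l z (bvar w). *)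
Definition gcof (l : BF) (z : X) (c : bool) : BF := restr l z c.
Definition gsubst (l : BF) (z : X) (w : X) : BF :=
  [ffun u => (bvar w u && gcof l z true u) || (~~ bvar w u && gcof l z false u)].

End BoolFun.

Local Open Scope ring_scope.
Section ValueFunctions.
Variables (R : realType) (X : finType).

Definition valuefun := X -> BF X -> R.

Variable I : valuefun.

Definition Bound : Prop := forall x f, 0 <= I x f <= 1.
Definition Dum : Prop := forall x f, x \notin dep f -> I x f = 0.
Definition Dic : Prop := forall x, I x (bvar x) = 1 /\ I x (bneg (bvar x)) = 1.

Definition ModEC : Prop :=
  forall (x : X) (f h g lf lh : BF X) (zf zh : X),
    mmodular_wit f g lf zf -> mmodular_wit h g lh zh ->
    ble (gcof lh zh true) (gcof lf zf true) ->
    ble (gcof lf zf false) (gcof lh zh false) ->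
    x \in dep g -> I x h <= I x f.

Definition unbiased : Prop := forall x g, I x g = I x (bneg g).

Definition derivative_dependent : Prop :=
  forall x f g, ble (deriv x g) (deriv x f) -> I x g <= I x f.

Definition rank_preserving : Prop :=
  forall f g x y, modular f g -> x \in dep g -> y \in dep g ->
    I y g <= I x g -> I y f <= I x f.

Definition weakly_rank_preserving : Prop :=
  forall f g x y, mmodular f g -> x \in dep g -> y \in dep g ->
    I y g <= I x g -> I y f <= I x f.

Definition chain_rule_decomposable : Prop :=
  forall (f g l : BF X) (z x xg : X), modular_wit f g l z -> x \in dep g ->
    xg \notin dep f -> I x f = I x g * I xg (gsubst l z xg).

Definition weakly_chain_rule_decomposable : Prop :=
  forall (f g l : BF X) (z x xg : X), mmodular_wit f g l z -> x \in dep g ->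
    xg \notin dep f -> I x f = I x g * I xg (gsubst l z xg).

End ValueFunctions.

(* Main.v *)
Require Import Defs.
From mathcomp Require Import all_boot all_order all_algebra reals.
Import Order.TTheory GRing.Theory Num.Theory.
Local Open Scope ring_scope.
Set Implicit Arguments. Unset Strict Implicit.

Section Aux.
Variable X : finType.
Implicit Types (f g l s : BF X) (u v w : assign X) (x y z : X).

Lemma updE u x c y : upd u x c y = if y == x then c else u y.
Proof. by rewrite /upd ffunE. Qed.

Lemma upd_same u x b c : upd (upd u x b) x c = upd u x c.
Proof. apply/ffunP => y; rewrite !updE; by case: (y == x). Qed.

Lemma upd_comm u x y b c : x != y -> upd (upd u x b) y c = upd (upd u y c) x b.
Proof.
move=> nxy; apply/ffunP => w; rewrite !updE.
case: (eqVneq w x) => [->|//]; by rewrite (negbTE nxy).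
Qed.

Lemma upd_id u x : upd u x (u x) = u.
Proof. apply/ffunP => y; rewrite updE; by case: eqP => // ->. Qed.

Lemma restrE f x c u : restr f x c u = f (upd u x c).
Proof. by rewrite /restr ffunE. Qed.

Lemma indep f x : x \notin dep f -> forall u b, f (upd u x b) = f u.
Proof.
rewrite /dep inE negbK => /eqP H u b.
have Hu : forall w, f (upd w x true) = f (upd w x false)
  by move=> w; rewrite -!restrE H.
rewrite -{2}(upd_id u x); case: b; case: (u x) => //; by rewrite Hu.
Qed.

Lemma indep_dep f x : (forall u b, f (upd u x b) = f u) -> x \notin dep f.
Proof. move=> H; rewrite /dep inE negbK; apply/eqP/ffunP => u; by rewrite !restrE !H. Qed.

Lemma restr_indep l z c y : y \notin dep l -> y \notin dep (restr l z c).
Proof.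
move=> H; apply: indep_dep => u b; rewrite !restrE.
case: (eqVneq y z) => [->|yz]; first by rewrite upd_same.
by rewrite upd_comm // indep.
Qed.

Lemma restr_self l z c u b : restr l z c (upd u z b) = restr l z c u.
Proof. by rewrite !restrE upd_same. Qed.

Lemma derivE x f u : Defs.deriv x f u = f (upd u x true) (+) f (upd u x false).
Proof. by rewrite /Defs.deriv ffunE !restrE. Qed.

Lemma substE l z s u :
  subst l z s u = (s u && restr l z true u) || (~~ s u && restr l z false u).
Proof. by rewrite /subst ffunE. Qed.

Lemma gsubstE l z (t : X) u :
  gsubst l z t u = (u t && restr l z true u) || (~~ u t && restr l z false u).
Proof. by rewrite /gsubst ffunE /bvar ffunE /gcof. Qed.

Lemma dep_deriv f x : x \notin dep f -> forall u, Defs.deriv x f u = false.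
Proof. move=> H u; by rewrite derivE !(indep H) addbb. Qed.

Lemma deriv_dep f x : (forall u, Defs.deriv x f u = false) -> x \notin dep f.
Proof.
move=> H; apply: indep_dep => u b.
have E : f (upd u x true) = f (upd u x false).
  by move: (H u); rewrite derivE; case: (f (upd u x true)); case: (f _).
rewrite -{2}(upd_id u x); case: b; case: (u x) => //; by rewrite E.
Qed.

Lemma agree_seq g (s : seq X) : forall u v, (forall y, y \notin s -> u y = v y) ->
  (forall y, y \in s -> y \notin dep g) -> g u = g v.
Proof.
elim: s => [|a s IH] u v Huv Hd.
  by congr (g _); apply/ffunP => y; exact: Huv.
rewrite -(indep (Hd a (mem_head _ _)) u (v a)).
apply: IH.
  move=> y ys; rewrite updE; case: (eqVneq y a) => [->//|ya].
  by apply: Huv; rewrite inE negb_or ya ys.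
by move=> y ys; apply: Hd; rewrite inE ys orbT.
Qed.

Lemma agree g (P : pred X) u v : (forall y, ~~ P y -> u y = v y) ->
  (forall y, P y -> y \notin dep g) -> g u = g v.
Proof.
move=> H1 H2; apply: (agree_seq (s := enum P)).
  by move=> y; rewrite mem_enum; exact: H1.
by move=> y; rewrite mem_enum; exact: H2.
Qed.

Lemma disj_notin l g x : [disjoint dep l & dep g] -> x \in dep g -> x \notin dep l.
Proof. by move=> D xg; rewrite (disjointFl D xg). Qed.

Lemma subst_deriv l z g x u : [disjoint dep l & dep g] -> x \in dep g ->
  Defs.deriv x (subst l z g) u = Defs.deriv x g u && (restr l z true u (+) restr l z false u).
Proof.
move=> D xg; have xl := disj_notin D xg.
rewrite !derivE !substE !(indep (restr_indep z true xl)) !(indep (restr_indep z false xl)).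
by case: (g _); case: (g _); case: (restr l z true u); case: (restr l z false u).
Qed.

Definition lmod l z : BF X :=
  [ffun u : assign X => u z && (restr l z true u (+) restr l z false u)].

Lemma lmodE l z u : lmod l z u = u z && (restr l z true u (+) restr l z false u).
Proof. by rewrite /lmod ffunE. Qed.

Lemma lmod_true l z u :
  restr (lmod l z) z true u = restr l z true u (+) restr l z false u.
Proof. by rewrite restrE lmodE updE eqxx !restr_self. Qed.

Lemma lmod_false l z u : restr (lmod l z) z false u = false.
Proof. by rewrite restrE lmodE updE eqxx. Qed.

Lemma lmod_dep l z y : y \notin dep l -> y \notin dep (lmod l z).
Proof.
move=> H; apply: indep_dep => u b; rewrite !lmodE.
case: (eqVneq y z) => [yz|yz].
  subst y.
  have E : restr l z true = restr l z false by move: H; rewrite /dep inE negbK => /eqP.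
  by rewrite E !addbb !andbF.
by rewrite updE eq_sym (negbTE yz) !(indep (restr_indep z true H))
  !(indep (restr_indep z false H)).
Qed.

Lemma lmod_disj l z g : [disjoint dep l & dep g] -> [disjoint dep (lmod l z) & dep g].
Proof.
move=> D; apply: disjointWl D; apply/subsetP => y; apply: contraTT; exact: lmod_dep.
Qed.

Lemma lmod_wit f g l z : modular_wit f g l z ->
  mmodular_wit (subst (lmod l z) z g) g (lmod l z) z.
Proof.
case=> nc [D _]; split; last by move=> u; rewrite lmod_false.
split => //; split => //; exact: lmod_disj.
Qed.

Lemma lmod_deriv f g l z x : modular_wit f g l z -> x \in dep g ->
  forall u, Defs.deriv x (subst (lmod l z) z g) u = Defs.deriv x f u.
Proof.
case=> nc [D ->] xg u.
by rewrite subst_deriv ?lmod_disj // subst_deriv // lmod_true lmod_false addbF.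
Qed.

Lemma lemA f g l z xg : modular_wit f g l z -> xg \notin dep f ->
  forall c u b, restr l z c (upd u xg b) = restr l z c u.
Proof.
case=> [[p [q npq]] [D Ef]] H c u b.
case: (boolP (xg \in dep g)) => xgg.
  exact: (indep (restr_indep z c (disj_notin D xgg))).
have [v gv] : exists v, g v = c.
  case: (eqVneq (g p) c) => [gp|gp]; first by exists p.
  exists q; move: npq gp; by case: (g p); case: (g q); case: c.
pose w := [ffun y => if y \in dep g then v y else u y].
have Hl : forall b', restr l z c (upd w xg b') = restr l z c (upd u xg b').
  move=> b'; apply: (agree (P := fun y => y \in dep g)).
    move=> y yg; rewrite !updE; case: (y == xg) => //; by rewrite ffunE (negbTE yg).
  move=> y yg; apply: restr_indep; exact: disj_notin D yg.
have Hg : forall b', g (upd w xg b') = c.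
  move=> b'; rewrite (indep xgg) -gv; apply: (agree (P := fun y => y \notin dep g)).
    by move=> y; rewrite negbK ffunE => ->.
  by [].
have Hf : forall b', f (upd w xg b') = restr l z c (upd u xg b').
  move=> b'; rewrite -Hl Ef substE Hg.
  by case: (c) => /=; rewrite ?orbF.
by rewrite -[in RHS](upd_id u xg) -!Hf !(indep H).
Qed.

End Aux.

Lemma dd_eq (R : realType) (X : finType) (I : valuefun R X) :
  derivative_dependent I -> forall x f g,
  (forall u, Defs.deriv x f u = Defs.deriv x g u) -> I x f = I x g.
Proof.
move=> DD x f g E; apply/le_anti; apply/andP; split; apply: DD => u;
  by rewrite E implybb.
Qed.

Theorem mainTheorem18 (R : realType) (X : finType) (I : valuefun R X) :
  derivative_dependent I ->
  [/\ unbiased I,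
      ModEC I,
      (weakly_chain_rule_decomposable I -> chain_rule_decomposable I),
      (weakly_rank_preserving I -> rank_preserving I)
    & (Dic I -> Dum I -> Bound I)].
Proof.
move=> DD; split.
- move=> x g; apply: (dd_eq DD) => u; rewrite !derivE /bneg !ffunE.
  by case: (g _); case: (g _).
- move=> x f h g lf lh zf zh [[_ [Df ->]] Mf] [[_ [Dh ->]] Mh] H1 H0 xg.
  apply: DD => u; rewrite !subst_deriv //.
  move: (Mf u) (Mh u) (H1 u) (H0 u); rewrite /gcof.
  case: (restr lf zf true u); case: (restr lf zf false u);
  case: (restr lh zh true u); case: (restr lh zh false u);
  by case: (Defs.deriv x g u).
- move=> W f g l z x xg M xgd xgf.
  have M' := lmod_wit M.
  have xgf' : xg \notin dep (subst (lmod l z) z g).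
    case: (boolP (xg \in dep g)) => xgg.
      by apply: deriv_dep => u; rewrite (lmod_deriv M xgg) dep_deriv.
    apply: indep_dep => u b.
    by rewrite !substE (indep xgg) !lmod_true !lmod_false !(lemA M xgf).
  rewrite -(dd_eq DD (lmod_deriv M xgd)) (W _ _ _ _ _ _ M' xgd xgf').
  congr (_ * _); apply: (dd_eq DD) => u.
  rewrite !derivE !gsubstE !updE eqxx /= !lmod_true !lmod_false !(lemA M xgf).
  by case: (restr l z true u); case: (restr l z false u).
- move=> W f g x y [l [z M]] xd yd H.
  rewrite -(dd_eq DD (lmod_deriv M xd)) -(dd_eq DD (lmod_deriv M yd)).
  apply: (W _ g x y _ xd yd H); exists (lmod l z), z; exact: lmod_wit M.
- move=> Dic Dum x f; apply/andP; split.
    have E : I x ([ffun=> false] : BF X) = 0.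
      by apply: Dum; apply: indep_dep => u b; rewrite !ffunE.
    by rewrite -E; apply: DD => u; rewrite derivE !ffunE.
  rewrite -(Dic x).1; apply: DD => u.
  by rewrite [Defs.deriv x (bvar x) u]derivE /bvar !ffunE eqxx implybT.
Qed.
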